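(* Let $k$ be a field of prime characteristic $p$. Define $T$-spaces of $k_0\langle X\rangle$ by $H_1=\{x_1^p\}^S$ and $H_{n+1}=(H_nH_1)^S$ for $n\ge1$. Then for every $m\ge1$, every $u\in H_m$ and every $v\in k_0\langle X\rangle$, $[u,v]=uv-vu\in H_m$.
   Context: $X=\{x_1,x_2,\ldots\}$ is countably infinite; $k_0\langle X\rangle$ is the free associative (non-unital) $k$-algebra on $X$. A $T$-space is a $k$-subspace of $k_0\langle X\rangle$ invariant under every algebra endomorphism of $k_0\langle X\rangle$; $(A)^S$ is the $T$-space generated by a subset $A$. For subsets $A,B$, $AB=\{ab:a\in A,b\in B\}$. *)

(* Defs.v *)
From HB Require Import structures.
From mathcomp Require Import all_boot all_algebra.
From mathcomp Require Import monalg.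
Set Implicit Arguments. Unset Strict Implicit. Unset Printing Implicit Defensive.
Import GRing.Theory.
Local Open Scope ring_scope.

(* Free unital associative algebra k<X> on X = {x_i | i : nat}:
   k-linear combinations of words (free monoid on nat). *)
Definition FA (k : fieldType) := {malg k[{fmonom nat}]}.

Definition xvar (k : fieldType) (i : nat) : FA k := << fmu i >>.

(* k_0<X> = the non-unital free algebra = elements with zero constant term *)
Definition in_k0 (k : fieldType) (f : FA k) : Prop := f@_(fmone nat) = 0.

Definition is_subspace (k : fieldType) (W : FA k -> Prop) : Prop :=
  (forall u, W u -> in_k0 u) /\ W 0 /\
  (forall u v, W u -> W v -> W (u + v)) /\
  (forall (c : k) u, W u -> W (c *: u)).

(* algebra endomorphism of k_0<X> (only its values on k_0<X> matter) *)
Definition is_endo (k : fieldType) (phi : FA k -> FA k) : Prop :=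
  forall u v, in_k0 u -> in_k0 v ->
    [/\ in_k0 (phi u), phi (u + v) = phi u + phi v,
        (forall c : k, phi (c *: u) = c *: phi u) &
        phi (u * v) = phi u * phi v].

Definition is_Tspace (k : fieldType) (W : FA k -> Prop) : Prop :=
  is_subspace W /\ (forall phi, is_endo phi -> forall u, W u -> W (phi u)).

Definition Tgen (k : fieldType) (A : FA k -> Prop) : FA k -> Prop :=
  fun u => forall W, is_Tspace W -> (forall a, A a -> W a) -> W u.

Definition setmul (k : fieldType) (A B : FA k -> Prop) : FA k -> Prop :=
  fun u => exists a b, [/\ A a, B b & u = a * b].

(* Hs p n = H_(n+1): H_1 = {x_1^p}^S, H_(n+1) = (H_n H_1)^S *)
Definition H1 (k : fieldType) (p : nat) : FA k -> Prop :=
  Tgen (fun u => u = xvar k 1 ^+ p).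

Definition Hs (k : fieldType) (p : nat) : nat -> FA k -> Prop :=
  fix go (n : nat) : FA k -> Prop :=
  match n with
  | 0 => @H1 k p
  | n'.+1 => Tgen (setmul (go n') (@H1 k p))
  end.

Definition H (k : fieldType) (p : nat) (m : nat) : FA k -> Prop := @Hs k p m.-1.

(* Main.v *)
Require Import Defs.
From HB Require Import structures.
From mathcomp Require Import all_boot all_algebra.
From mathcomp Require Import monalg.
From mathcomp Require Import zify.
Import GRing.Theory.
Local Open Scope ring_scope.

Section Basics.
Variable k : fieldType.
Local Notation F := (FA k).

Lemma one_fm : (@one (fmonom nat)) = fmone nat.
Proof. reflexivity. Qed.

Lemma k0_mul (a b : F) : in_k0 a -> in_k0 b -> in_k0 (a * b).
Proof.
rewrite /in_k0 -one_fm => ha hb.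
have := (@mcoeff1g_is_multiplicative (fmonom nat) k).1 a b.
by rewrite /= ha hb mulr0.
Qed.

Lemma k0_0 : in_k0 (0 : F). Proof. by rewrite /in_k0 mcoeff0. Qed.
Lemma k0_D (a b : F) : in_k0 a -> in_k0 b -> in_k0 (a + b).
Proof. by rewrite /in_k0 mcoeffD => -> ->; rewrite addr0. Qed.
Lemma k0_Z c (a : F) : in_k0 a -> in_k0 (c *: a).
Proof. by rewrite /in_k0 mcoeffZ => ->; rewrite mulr0. Qed.
Lemma k0_N (a : F) : in_k0 a -> in_k0 (- a).
Proof. by rewrite /in_k0 mcoeffN => ->; rewrite oppr0. Qed.
Lemma k0_B (a b : F) : in_k0 a -> in_k0 b -> in_k0 (a - b).
Proof. by move=> ha hb; apply: k0_D => //; apply: k0_N. Qed.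
Lemma k0_X (a : F) n : in_k0 a -> in_k0 (a ^+ n.+1).
Proof. move=> ha; elim: n => [|n IH]; first by rewrite expr1.
by rewrite exprS; apply: k0_mul. Qed.

Lemma xvar_k0 i : in_k0 (xvar k i).
Proof. by rewrite /in_k0 /xvar mcoeffU1 fmP fmoneE fmuE. Qed.

Lemma k0_Tspace : is_Tspace (@in_k0 k).
Proof.
split; first by split=> //; split; [exact: k0_0|split; [exact: k0_D|exact: k0_Z]].
by move=> phi hphi u hu; case: (hphi u u hu hu).
Qed.

Lemma Tgen_incl (A : F -> Prop) a : A a -> Tgen A a.
Proof. by move=> ha W _ hA; apply: hA. Qed.

Lemma Tgen_k0 (A : F -> Prop) : (forall a, A a -> in_k0 a) -> forall u, Tgen A u -> in_k0 u.
Proof. by move=> hA u hu; apply: hu => //; exact: k0_Tspace. Qed.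

Lemma endo_comp (phi psi : F -> F) : is_endo phi -> is_endo psi -> is_endo (phi \o psi).
Proof.
move=> hphi hpsi u v hu hv.
case: (hpsi u v hu hv) => hu' hD hZ hM.
case: (hpsi v v hv hv) => hv' _ _ _.
case: (hphi _ _ hu' hv') => h1 h2 h3 h4.
split => //=; first by rewrite hD h2.
  by move=> c; rewrite hZ h3.
by rewrite hM h4.
Qed.

Lemma endo_id : is_endo (@id F).
Proof. by move=> u v hu hv; split. Qed.

Lemma Tgen_Tspace (A : F -> Prop) : (forall a, A a -> in_k0 a) -> is_Tspace (Tgen A).
Proof.
move=> hA; split.
  split; first exact: Tgen_k0.
  split; first by move=> W [[_ [h0 _]] _] _.
  split.
    by move=> u v hu hv W hW hAW; case: (hW) => [[_ [_ [hD _]]] _]; apply: hD; [apply: hu|apply: hv].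
  by move=> c u hu W hW hAW; case: (hW) => [[_ [_ [_ hZ]]] _]; apply: hZ; apply: hu.
by move=> phi hphi u hu W hW hAW; case: (hW) => [_ hE]; apply: hE => //; apply: hu.
Qed.

Lemma Tspace_B (W : F -> Prop) : is_Tspace W -> forall u v, W u -> W v -> W (u - v).
Proof.
move=> [[_ [_ [hD hZ]]] _] u v hu hv; apply: hD => //.
by rewrite -scaleN1r; apply: hZ.
Qed.

Lemma Tspace_sum (W : F -> Prop) : is_Tspace W -> forall (I : Type) (r : seq I) (P : pred I) (f : I -> F),
  (forall i, W (f i)) -> W (\sum_(i <- r | P i) f i).
Proof.
move=> [[_ [h0 [hD hZ]]] _] I r P f hf.
by elim/big_rec: _ => // i x _ hx; apply: hD.
Qed.

Lemma endo0 (phi : F -> F) : is_endo phi -> phi 0 = 0.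
Proof.
move=> h; case: (h 0 0 k0_0 k0_0) => _ hD _ _.
have: phi 0 + phi 0 = phi 0 + 0 by rewrite addr0 -hD addr0.
exact: addrI.
Qed.

Lemma endoX (phi : F -> F) (a : F) n : is_endo phi -> in_k0 a -> phi (a ^+ n.+1) = phi a ^+ n.+1.
Proof.
move=> h ha; elim: n => [|n IH]; first by rewrite !expr1.
rewrite exprS; case: (h a (a ^+ n.+1) ha (@k0_X a n ha)) => _ _ _ ->.
by rewrite IH -exprS.
Qed.

End Basics.

Section Subst.
Variable k : fieldType.
Local Notation F := (FA k).

Lemma scal_comm (c : k) (g : F) : c%:MP * g = g * c%:MP.
Proof.
rewrite !malgM_def fgmulUg fgmulgU; apply: eq_bigr => w _.
by rewrite mul1m mulm1 mulrC.
Qed.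

Lemma scalerAr_F (c : k) (a b : F) : a * (c *: b) = c *: (a * b).
Proof. by rewrite -!mul_malgC mulrA -scal_comm mulrA. Qed.

Definition hpow (f : F) (w : fmonom nat) : F := f ^+ size w.

Lemma hpow_mmorph (f : F) : mmorphism (hpow f).
Proof.
split; last by rewrite /hpow /= fm1 expr0.
by move=> w1 w2; rewrite /hpow fmM size_cat exprD.
Qed.

HB.instance Definition _ (f : F) := isMultiplicative.Build (fmonom nat) F (hpow f) (hpow_mmorph f).

Definition sigma (f : F) (u : F) : F := mmap (@malgC (fmonom nat) k) (hpow f) u.

Lemma sigma_mul (f : F) (u v : F) : sigma f (u * v) = sigma f u * sigma f v.
Proof.
have := (@commr_mmap_is_multiplicative (fmonom nat) k F (@malgC (fmonom nat) k) (hpow f)).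
move=> H; have {}H := H (fun g m m' => scal_comm _ _).
exact: H.1.
Qed.

Lemma sigma_endo (f : F) : in_k0 f -> is_endo (sigma f).
Proof.
move=> hf u v hu hv; split.
- rewrite /in_k0 -one_fm /sigma mmapE.
  rewrite (@raddf_sum _ _ (@mcoeff (fmonom nat) k (@one (fmonom nat)))).
  apply: big1 => w _ /=; rewrite mcoeffCM /hpow.
  have [->|] := eqVneq w (@one (fmonom nat)); first by rewrite one_fm hu mul0r.
  rewrite -fdeg_eq0 fdegE; case: (size w) => // n _.
  by rewrite (@k0_X k f n hf) mulr0.
- exact: mmapD.
- by move=> c; rewrite /sigma mmapZ mul_malgC.
- exact: sigma_mul.
Qed.

Lemma sigma_x (f : F) i : sigma f (xvar k i) = f.
Proof. by rewrite /sigma /xvar mmapU /= mpolyC1E mul1r /hpow fmU expr1. Qed.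

Lemma pow_H1 p (f : F) : (0 < p)%N -> in_k0 f -> H1 p (f ^+ p).
Proof.
case: p => // p _ hf W hW hA.
case: hW => _ hE.
have := hE _ (sigma_endo f hf) _ (hA _ erefl).
by rewrite (@endoX k _ _ p (sigma_endo f hf) (xvar_k0 k 1)) sigma_x.
Qed.

End Subst.

Section PowSum.
Variable k : fieldType.
Variable p : nat.
Hypothesis hp : p \in [pchar k].

Lemma natr_inj_p : {in iota 0 p &, injective (fun j : nat => (j%:R : k))}.
Proof.
have key : forall i j, (i <= j)%N -> (j < p)%N -> (i%:R : k) = j%:R -> i = j.
  move=> i j le hj e.
  have : ((j - i)%:R : k) = 0 by rewrite natrB // e subrr.
  move/eqP; rewrite -(dvdn_pcharf hp) => hd.
  case h0: (j - i)%N => [|n]; first by lia.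
  have := dvdn_leq (isT : (0 < n.+1)%N) (eq_ind _ (fun t => (p %| t)%N) hd _ h0).
  lia.
move=> i j; rewrite !mem_iota !add0n => /andP [_ hi] /andP [_ hj] e.
case: (leqP i j) => h; first exact: key.
by symmetry; apply: key => //; apply: ltnW.
Qed.

Lemma natr_neq0 j : (0 < j < p)%N -> (j%:R : k) != 0.
Proof.
move=> /andP [h0 hj]; apply/negP => /eqP e.
have := natr_inj_p; move/(_ j 0%N); rewrite !mem_iota !add0n e /=.
have p0 : (0 < p)%N by lia.
by rewrite hj p0 => /(_ isT isT erefl) => ej; rewrite ej in h0.
Qed.

Lemma powsum e : (0 < e)%N -> (e < p.-1)%N -> \sum_(j < p) (j%:R : k) ^+ e = 0.
Proof.
move=> he hep.
pose s := [seq (j%:R : k) | j <- iota 0 p].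
have us : uniq s by rewrite map_inj_in_uniq ?iota_uniq //; exact: natr_inj_p.
have -> : \sum_(j < p) (j%:R : k) ^+ e = \sum_(x <- s) x ^+ e.
  by rewrite big_map -(big_mkord xpredT (fun j => (j%:R : k) ^+ e)) /index_iota subn0.
pose s' := [seq (j%:R : k) | j <- iota 1 p.-1].
have : ~~ all (root ('X^e - 1)) s'.
  apply/negP => hall.
  have Pnz : ('X^e - 1 : {poly k}) != 0 by rewrite -size_poly_eq0 size_Xn_sub_1.
  have us1 : uniq s'.
    rewrite map_inj_in_uniq ?iota_uniq // => i j; rewrite !mem_iota => hi hj.
    apply: natr_inj_p; rewrite mem_iota; lia.
  have := max_poly_roots Pnz hall us1.
  rewrite size_Xn_sub_1 // size_map size_iota; lia.
case/allPn => x /mapP [j]; rewrite mem_iota => hj -> hroot.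
have jnz : (j%:R : k) != 0 by apply: natr_neq0; lia.
have aen1 : (j%:R : k) ^+ e != 1.
  clear x.
  by move: hroot; rewrite /root !hornerE subr_eq0.
set a := (j%:R : k) in jnz aen1 *.
have sub : {subset [seq a * x | x <- s] <= s}.
  move=> y /mapP [z /mapP [i hi ->] ->].
  rewrite /a -natrM -(GRing.natr_mod_pchar hp); apply: map_f.
  rewrite mem_iota add0n /= ltn_pmod //; lia.
have us' : uniq [seq a * x | x <- s] by rewrite map_inj_uniq //; exact: mulfI.
have [_ eqs] := uniq_min_size us' sub (eq_leq (esym (size_map _ _))).
have pe : perm_eq s [seq a * x | x <- s].
  by apply: uniq_perm => // y; rewrite eqs.
have eqS : \sum_(x <- s) x ^+ e = a ^+ e * \sum_(x <- s) x ^+ e.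
  rewrite {1}(perm_big _ pe) big_map.
  under eq_bigr do rewrite exprMn.
  by rewrite -big_distrr.
move/eqP: eqS.
rewrite eq_sym -subr_eq0 -{2}(mul1r (\sum_(x <- s) x ^+ e)) -mulrBl mulf_eq0 subr_eq0.
by rewrite (negbTE aen1) /= => /eqP.
Qed.

End PowSum.

Section Alpha.
Variable k : fieldType.
Variable p : nat.
Hypothesis hp : p \in [pchar k].

Lemma alpha1 : \sum_(j < p) (j%:R : k)^-1 * (j%:R) ^+ 1 = -1.
Proof.
have pp := GRing.pcharf_prime hp.
have p0 : (0 < p)%N by apply: prime_gt0.
case: p hp pp p0 => // q hq pq _.
rewrite big_ord_recl /= invr0 mul0r add0r.
rewrite (eq_bigr (fun _ => 1)); last first.
  move=> i _; rewrite expr1 mulVf //; apply: (@natr_neq0 _ _ hq).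
  rewrite /bump /=; have := ltn_ord i; lia.
rewrite sumr_const card_ord.
have := GRing.pcharf0 hq; rewrite -addn1 natrD => /eqP.
by rewrite addr_eq0 => /eqP.
Qed.

Lemma alphai i : (1 < i < p)%N -> \sum_(j < p) (j%:R : k)^-1 * (j%:R) ^+ i = 0.
Proof.
move=> /andP [h1 h2].
rewrite (eq_bigr (fun j : 'I_p => (j%:R : k) ^+ i.-1)).
  apply: (@powsum _ _ hp); lia.
move=> j _; have [->|nz] := eqVneq (j%:R : k) 0.
  by rewrite invr0 mul0r expr0n; case: i h1 h2 => [|[|i]].
case: i h1 h2 => [//|i] _ _.
by rewrite exprS mulKf.
Qed.

End Alpha.

Section CommPow.
Variable F : nzRingType.
Variables (g v w : F).
Hypothesis hw : w = g * v - v * g.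
Let P : {poly F} := g%:P + w%:P * 'X.

Lemma coefP j : P`_j = (if j == 0%N then g else if j == 1%N then w else 0).
Proof.
rewrite /P coefD coefMX !coefC.
by case: j => [|[|j]] //=; rewrite ?addr0 ?add0r.
Qed.

Lemma sizeP : (size P <= 2)%N.
Proof. by apply/leq_sizeP => j hj; rewrite coefP; case: j hj => [|[|j]]. Qed.

Lemma coefQS n i : (P ^+ n.+1)`_i = (P ^+ n)`_i * g + (if i == 0%N then 0 else (P ^+ n)`_i.-1 * w).
Proof.
rewrite exprSr /P mulrDr coefD coefMC mulrA coefMX.
by case: i => //= i; rewrite coefMC.
Qed.

Lemma coefQ0 n : (P ^+ n)`_0 = g ^+ n.
Proof.
elim: n => [|n IH]; first by rewrite !expr0 coefC.
by rewrite coefQS IH addr0 -exprSr.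
Qed.

Lemma coefQ1 n : (P ^+ n)`_1 = g ^+ n * v - v * g ^+ n.
Proof.
elim: n => [|n IH]; first by rewrite !expr0 coefC mul1r mulr1 subrr.
rewrite coefQS IH /= coefQ0 hw.
by rewrite mulrBl mulrBr !exprSr !mulrA addrC addrA subrK.
Qed.

Lemma coefQn n : (P ^+ n)`_n = w ^+ n.
Proof.
elim: n => [|n IH]; first by rewrite !expr0 coefC.
rewrite coefQS /= IH -exprSr.
suff -> : (P ^+ n)`_n.+1 = 0 by rewrite mul0r add0r.
by rewrite nth_default // (leq_trans (size_poly_exp_leq _ _)) //; rewrite ltnS -{2}[n]mul1n leq_mul2r; apply/orP; right; have := sizeP; case: (size P) => [|[|[|]]].
Qed.

Lemma sizeQ n : (size (P ^+ n) <= n.+1)%N.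
Proof. by rewrite (leq_trans (size_poly_exp_leq _ _)) //; rewrite ltnS -{2}[n]mul1n leq_mul2r; apply/orP; right; have := sizeP; case: (size P) => [|[|[|]]]. Qed.



Lemma expand_gen (x : F) n : (forall y, x * y = y * x) ->
  (g + w * x) ^+ n = \sum_(i < n.+1) (P ^+ n)`_i * x ^+ i.
Proof.
move=> hx.
have hP : P.[x] = g + w * x by rewrite /P hornerD hornerC hornerCM hornerX.
have comm : comm_poly P x by rewrite /comm_poly hx.
by rewrite -hP -horner_exp_comm // (horner_coef_wide _ (sizeQ n)).
Qed.

End CommPow.

Lemma split3 (V : zmodType) n (f : nat -> V) : \sum_(i < n.+3) f i = f 0%N + f 1%N + \sum_(i < n) f i.+2 + f n.+2.
Proof. by rewrite big_ord_recl big_ord_recl big_ord_recr /= !addrA. Qed.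
Lemma solve3 (V : zmodType) (a b x : V) : x = a + b - (a + - x + b).
Proof. by rewrite [a + - x + b]addrAC opprB addrCA subrr addr0. Qed.

Lemma H1_Tspace (k : fieldType) p : (0 < p)%N -> is_Tspace (@H1 k p).
Proof.
case: p => // p _; apply: Tgen_Tspace => a ->.
exact: (@k0_X k (xvar k 1) p (xvar_k0 k 1)).
Qed.

Lemma commpow (k : fieldType) (p : nat) (hp : p \in [pchar k]) (g v : FA k) :
  in_k0 g -> in_k0 v -> H1 p (g ^+ p * v - v * g ^+ p).
Proof.
move=> hg hv.
have pp := GRing.pcharf_prime hp.
have p1 : (1 < p)%N by apply: prime_gt1.
have p0 : (0 < p)%N by apply: ltnW.
have hT := @H1_Tspace k p p0.
have [[_ [h0 [hD hZ]]] _] := hT.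
have [w hw] : {w : FA k | w = g * v - v * g} by eexists.
have wk0 : in_k0 w by rewrite hw; apply: k0_B; apply: k0_mul.
pose q := fun i => ((g%:P + w%:P * 'X) ^+ p)`_i.
have E c : (g + c *: w) ^+ p = \sum_(i < p.+1) c ^+ i *: q i.
  rewrite -mul_malgC scal_comm (@expand_gen _ g w) => [|y]; last by rewrite scal_comm.
  by apply: eq_bigr => i _; rewrite -rmorphXn /= -scal_comm mul_malgC.
have Hsum : H1 p (\sum_(j < p) (j%:R : k)^-1 *: (g + (j%:R : k) *: w) ^+ p).
  elim/big_rec: _ => // j x _ hx; apply: hD => //; apply: hZ; apply: pow_H1 => //.
  by apply: k0_D => //; apply: k0_Z.
have Hq0 : H1 p (q 0%N) by rewrite /q coefQ0; exact: pow_H1.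
have Hqp : H1 p (q p) by rewrite /q coefQn; exact: pow_H1.
have q1 : q 1%N = g ^+ p * v - v * g ^+ p := (@coefQ1 _ g v w hw p).
have Esum : \sum_(j < p) (j%:R : k)^-1 *: (g + (j%:R : k) *: w) ^+ p =
   \sum_(i < p.+1) (\sum_(j < p) (j%:R : k)^-1 * (j%:R) ^+ i) *: q i.
  under eq_bigr do rewrite E scaler_sumr.
  rewrite exchange_big /=; apply: eq_bigr => i _.
  by rewrite scaler_suml; apply: eq_bigr => j _; rewrite scalerA.
suff Hq1 : H1 p (q 1%N) by move: Hq1; rewrite q1.
move: Esum Hsum => -> Hsum.
move: Hsum Hq0 Hqp; clearbody q; clear q1 E.
case: p hp pp p1 p0 hT hD hZ h0 => [|[|p]] // hp pp _ _ hT hD hZ h0.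
rewrite (@split3 _ p (fun i => (\sum_(j < p.+2) (j%:R : k)^-1 * (j%:R) ^+ i) *: q i)).
rewrite (@alpha1 _ _ hp) [\sum_(i < p) _]big1; last first.
  move=> i _; rewrite (@alphai _ _ hp) ?scale0r //.
  by have := ltn_ord i; lia.
rewrite addr0 scaleN1r => HS H0 Hp.
rewrite (@solve3 _ ((\sum_(j < p.+2) (j%:R : k)^-1 * (j%:R) ^+ 0) *: q 0%N)
  ((\sum_(j < p.+2) (j%:R : k)^-1 * (j%:R) ^+ p.+2) *: q p.+2) (q 1%N)).
rewrite -scaleN1r; apply: (hD); last by apply: (hZ).
by apply: (hD); apply: (hZ).
Qed.


Arguments Tgen_Tspace {k A}.
Arguments Tgen_k0 {k A}.
Arguments endo0 {k phi}.
Arguments endo_comp {k phi psi}.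
Arguments endo_id {k}.
Arguments Tgen_incl {k A a}.
Arguments scalerAr_F {k}.
Arguments commpow {k}.
Arguments k0_mul {k a b}.

Section Main.
Variable k : fieldType.
Local Notation F := (FA k).

Lemma comm_add (a b v : F) : (a + b) * v - v * (a + b) = (a * v - v * a) + (b * v - v * b).
Proof. by rewrite mulrDl mulrDr opprD addrACA. Qed.

Lemma comm_scale (c : k) (a v : F) : (c *: a) * v - v * (c *: a) = c *: (a * v - v * a).
Proof. by rewrite -scalerAl scalerAr_F scalerBr. Qed.

Lemma comm_mul (b c v : F) : b * c * v - v * (b * c) = b * (c * v - v * c) + (b * v - v * b) * c.
Proof. by rewrite mulrBr mulrBl !mulrA addrA subrK. Qed.

Lemma Tgen_comm (A : F -> Prop) : (forall a, A a -> in_k0 a) ->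
  (forall a, A a -> forall phi, is_endo phi -> forall v, in_k0 v ->
     Tgen A (phi a * v - v * phi a)) ->
  forall u, Tgen A u -> forall v, in_k0 v -> Tgen A (u * v - v * u).
Proof.
move=> hA hgen.
have hT := Tgen_Tspace hA.
have [[hk0 [h0 [hD hZ]]] hE] := hT.
pose W := fun u => Tgen A u /\ forall phi, is_endo phi -> forall v, in_k0 v ->
     Tgen A (phi u * v - v * phi u).
have hW : is_Tspace W.
  split; first split.
  - by move=> u [hu _]; apply: hk0.
  split.
    split => // phi hphi v hv; rewrite (endo0 hphi) mul0r mulr0 subrr //.
  split.
    move=> u u' [hu Hu] [hu' Hu']; split; first by apply: (hD).
    move=> phi hphi v hv.
    case: (hphi u u' (hk0 _ hu) (hk0 _ hu')) => _ -> _ _.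
    by rewrite comm_add; apply: (hD); [apply: Hu|apply: Hu'].
  move=> c u [hu Hu]; split; first by apply: (hZ).
  move=> phi hphi v hv.
  case: (hphi u u (hk0 _ hu) (hk0 _ hu)) => _ _ -> _.
  by rewrite comm_scale; apply: (hZ); apply: Hu.
  move=> psi hpsi u [hu Hu]; split; first by apply: (hE).
  move=> phi hphi v hv.
  exact: (Hu (phi \o psi) (endo_comp hphi hpsi) v hv).
move=> u hu v hv.
have [_ H] : W u.
  apply: hu => // a ha; split; first exact: Tgen_incl.
  exact: hgen.
exact: (H id endo_id v hv).
Qed.

Variable p : nat.
Hypothesis hp : p \in [pchar k].

Let p0 : (0 < p)%N.
Proof. exact: prime_gt0 (GRing.pcharf_prime hp). Qed.

Lemma gen0_k0 : forall a : F, a = xvar k 1 ^+ p -> in_k0 a.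
Proof.
move=> a ->; case: p p0 => // q _.
exact: (@k0_X k (xvar k 1) q (xvar_k0 k 1)).
Qed.

Lemma Hs_k0 n (u : F) : Hs p n u -> in_k0 u.
Proof.
elim: n u => [|n IH] u; first exact: (Tgen_k0 gen0_k0 u).
move=> hu; apply: (Tgen_k0 _ _ hu) => a [b [c [hb hc ->]]].
by apply: k0_mul; [apply: IH | exact: (Tgen_k0 gen0_k0 _ hc)].
Qed.

Lemma Hs_Tspace n : is_Tspace (@Hs k p n).
Proof.
case: n => [|n]; first exact: Tgen_Tspace gen0_k0.
apply: Tgen_Tspace => a [b [c [hb hc ->]]].
by apply: k0_mul; [exact: (Hs_k0 _ _ hb) | exact: (Tgen_k0 gen0_k0 _ hc)].
Qed.

Lemma H1_comm (u v : F) : H1 p u -> in_k0 v -> H1 p (u * v - v * u).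
Proof.
move=> hu hv; refine (Tgen_comm _ gen0_k0 _ u hu v hv) => a -> phi hphi w hw.
have x1 := xvar_k0 k 1.
case: (hphi _ _ x1 x1) => hx _ _ _.
case: p p0 hp => // q _ hq.
rewrite (@endoX k _ _ q hphi x1).
exact: commpow.
Qed.

Lemma Hs_comm n (u v : F) : Hs p n u -> in_k0 v -> Hs p n (u * v - v * u).
Proof.
elim: n u v => [|n IH] u v; first exact: H1_comm.
have hTn := Hs_Tspace n.
have hTn1 := Hs_Tspace n.+1.
have hA : forall a : F, setmul (Hs p n) (H1 p) a -> in_k0 a.
  move=> a [b [c [hb hc ->]]].
  by apply: k0_mul; [exact: (Hs_k0 _ _ hb) | exact: (Tgen_k0 gen0_k0 _ hc)].
move=> hu hv; refine (Tgen_comm _ hA _ u hu v hv).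
move=> a [b [c [hb hc ->]]] phi hphi w hw.
have bk := Hs_k0 _ _ hb.
have ck := Tgen_k0 gen0_k0 _ hc.
case: (hphi b c bk ck) => _ _ _ ->.
case: (hphi b b bk bk) => Bk _ _ _.
case: (hphi c c ck ck) => Ck _ _ _.
have HB : Hs p n (phi b) by case: hTn => _ hE; apply: hE.
have HC : H1 p (phi c) by case: (Hs_Tspace 0) => _ hE; apply: hE.
rewrite comm_mul.
case: hTn1 => [[_ [_ [hD _]]] _]; apply: hD.
  apply: Tgen_incl; exists (phi b), (phi c * w - w * phi c); split => //.
  exact: H1_comm.
apply: Tgen_incl; exists (phi b * w - w * phi b), (phi c); split => //.
exact: IH.
Qed.

End Main.

Theorem lemma4p4 (k : fieldType) (p : nat) (hp : p \in [pchar k]) (m : nat)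
  (hm : (1 <= m)%N) (u v : FA k) :
  H p m u -> in_k0 v -> H p m (u * v - v * u).
Proof. exact: Hs_comm. Qed.
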